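(* Assume $d\ge1$ and let $\lambda\in\mathbb R$. Let $\bar u^*_0,\dots,\bar u^*_d$ be an ordering of $u^*_0,\dots,u^*_d$. Then the matrix representing $(L^*+\lambda)^2$ with respect to the ordered basis $\bar u^*_0,\dots,\bar u^*_d$ is irreducible tridiagonal if and only if one of the following holds: (i) $2\lambda+a^*_{d-1}+a^*_d\neq0$, $2\lambda+a^*_i+a^*_{i+1}=0$ for all $0\le i\le d-2$, and either $\bar u^*_i=u^*_{2i}$ for $0\le i\le\lfloor d/2\rfloor$ and $\bar u^*_i=u^*_{2(d-i)+1}$ for $\lfloor d/2\rfloor+1\le i\le d$; or $\bar u^*_i=u^*_{2i+1}$ for $0\le i\le\lceil d/2\rceil-1$ and $\bar u^*_i=u^*_{2(d-i)}$ for $\lceil d/2\rceil\le i\le d$. (ii) $2\lambda+a^*_0+a^*_1\neq0$, $2\lambda+a^*_i+a^*_{i+1}=0$ for all $1\le i\le d-1$, and either $\bar u^*_i=u^*_{d-2i}$ for $0\le i\le\lfloor d/2\rfloor$ and $\bar u^*_i=u^*_{2i-d-1}$ for $\lfloor d/2\rfloor+1\le i\le d$; or $\bar u^*_i=u^*_{d-2i-1}$ for $0\le i\le\lceil d/2\rceil-1$ and $\bar u^*_i=u^*_{2i-d}$ for $\lceil d/2\rceil\le i\le d$.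
   Context: Fix an integer $d\ge0$ and $r,s\in(-1,\infty)$. Write $(x)_i=x(x+1)\cdots(x+i-1)$, $(x)_0=1$. For $0\le i\le d$ put $\theta_i=(d-i)(d-i+r+s+1)$ (distinct) and $\theta^*_i=i$. Put $b^*_i=\frac{(d-i)(i-d-s)(2d-2i+r+s+2)_i}{(2d-2i+r+s)_{i+1}}$ ($0\le i\le d-1$), $c^*_i=\frac{i(i-d-r-1)(d-i+r+s+1)_{d-i}}{(d-i+r+s+2)_{d-i+1}}$ ($1\le i\le d$), $b^*_d=c^*_0=0$, $a^*_i=\theta^*_0-b^*_i-c^*_i$, $k^*_i=\frac{b^*_0\cdots b^*_{i-1}}{c^*_1\cdots c^*_i}$ ($0\le i\le d$). Put $c_i=i(i+r)$ and $\nu=\frac{\prod_{j=1}^d(\theta_0-\theta_j)}{c_1\cdots c_d}$. Let $\mathcal P_d(\mathbb R)$ be the real polynomials of degree at most $d$, each determined by its values at $\theta_0,\dots,\theta_d$. Let $L^*$ be the linear map on $\mathcal P_d(\mathbb R)$ with $(L^*f)(\theta_i)=b^*_i f(\theta_{i+1})+a^*_i f(\theta_i)+c^*_i f(\theta_{i-1})$ ($0\le i\le d$; terms with coefficient $b^*_d$ or $c^*_0$ omitted). Let $u^*_i\in\mathcal P_d(\mathbb R)$ be defined by $u^*_i(\theta_j)=0$ for $j\neq i$ and $u^*_i(\theta_i)=\nu/k^*_i$; these form a basis. A square matrix is irreducible tridiagonal if its nonzero entries lie on the diagonal, subdiagonal or superdiagonal and all subdiagonal and superdiagonal entries are nonzero.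 *)

(* Defs.v *)
(* Leonard-system data for the dual Hahn case. *)
From mathcomp Require Import all_boot all_order perm all_algebra.
Set Implicit Arguments. Unset Strict Implicit. Unset Printing Implicit Defensive.
Import Order.TTheory GRing.Theory Num.Theory.
Local Open Scope ring_scope.

Section Defs.
Variable R : realFieldType.
Variables (d : nat) (r s : R).

Definition poch (x : R) (i : nat) : R := \prod_(k < i) (x + k%:R).

Definition theta (i : nat) : R := (d - i)%:R * ((d - i)%:R + r + s + 1).

Definition bstar (i : nat) : R :=
  if (i < d)%N then
    (d - i)%:R * (i%:R - d%:R - s) * poch (2 * (d - i)%:R + r + s + 2) i
    / poch (2 * (d - i)%:R + r + s) i.+1
  else 0.

Definition cstar (i : nat) : R :=
  if (0 < i)%N then
    i%:R * (i%:R - d%:R - r - 1) * poch ((d - i)%:R + r + s + 1) (d - i)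
    / poch ((d - i)%:R + r + s + 2) (d - i).+1
  else 0.

(* theta*_0 = 0 *)
Definition astar (i : nat) : R := 0 - bstar i - cstar i.

Definition kstar (i : nat) : R :=
  (\prod_(l < i) bstar l) / (\prod_(1 <= l < i.+1) cstar l).

Definition cc (i : nat) : R := i%:R * (i%:R + r).

Definition nu : R :=
  (\prod_(1 <= j < d.+1) (theta 0 - theta j)) / (\prod_(1 <= j < d.+1) cc j).

Definition lagr (i : 'I_d.+1) : {poly R} :=
  \prod_(j < d.+1 | j != i) (('X - (theta j)%:P) * ((theta i - theta j)^-1)%:P).

Definition interp (v : nat -> R) : {poly R} :=
  \sum_(i < d.+1) v i *: lagr i.

(* L^* ; the terms with coefficient b*_d or c*_0 vanish since these are 0 *)
Definition Lstar (f : {poly R}) : {poly R} :=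
  interp (fun i => bstar i * f.[theta i.+1] + astar i * f.[theta i]
                   + cstar i * f.[theta i.-1]).

Definition ustar (i : 'I_d.+1) : {poly R} := (nu / kstar i) *: lagr i.

End Defs.
Arguments poch {R}.
Arguments theta {R}.
Arguments bstar {R}.
Arguments cstar {R}.
Arguments astar {R}.
Arguments kstar {R}.
Arguments cc {R}.
Arguments nu {R}.
Arguments lagr {R}.
Arguments interp {R}.
Arguments Lstar {R}.
Arguments ustar {R}.

Definition LstarL2 (R : realFieldType) (d : nat) (r s lam : R) (f : {poly R}) :=
  let g := Lstar d r s f + lam *: f in Lstar d r s g + lam *: g.

Definition represents (R : realFieldType) (n : nat) (T : {poly R} -> {poly R})
  (ub : 'I_n -> {poly R}) (M : 'M[R]_n) : Prop :=
  forall j : 'I_n, T (ub j) = \sum_(i < n) M i j *: ub i.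

Definition irred_tridiag (R : realFieldType) (n : nat) (M : 'M[R]_n) : Prop :=
  (forall i j : 'I_n, (i.+1 < j)%N \/ (j.+1 < i)%N -> M i j = 0) /\
  (forall i j : 'I_n, (i.+1 = j)%N \/ (j.+1 = i)%N -> M i j != 0).

(* Main.v *)
Require Import Defs.
From mathcomp Require Import all_boot all_order perm all_algebra.
Import Order.TTheory GRing.Theory Num.Theory.
From mathcomp Require Import zify ring lra.

Definition adj1 (d p q : nat) : bool :=
  (p == q.+2) || (q == p.+2) || ((p == d) && (q == d.-1)) || ((q == d) && (p == d.-1)).
Definition rho (d p : nat) : nat := if p %% 2 == 1 then d - p %/ 2 else p %/ 2.

Lemma rho_adj d p q : 0 < d -> p <= d -> q <= d ->
  adj1 d p q = (rho d p == (rho d q).+1) || (rho d q == (rho d p).+1).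
Proof. rewrite /adj1 /rho => *; case: ifP => [/eqP ?|/negbT/eqP ?]; case: ifP => [/eqP ?|/negbT/eqP ?]; lia. Qed.

Lemma rho_inj d p q : p <= d -> q <= d -> rho d p = rho d q -> p = q.
Proof. rewrite /rho => hp hq; case: ifP => [/eqP ?|/negbT/eqP ?]; case: ifP => [/eqP ?|/negbT/eqP ?]; lia. Qed.

Lemma rho_le d p : p <= d -> rho d p <= d.
Proof. rewrite /rho => hp; case: ifP => [/eqP ?|/negbT/eqP ?]; lia. Qed.

Definition Ord1 d (S : nat -> nat) :=
  (forall i, i <= d -> i <= d %/ 2 -> S i = 2 * i) /\
  (forall i, i <= d -> d %/ 2 < i -> S i = (2 * (d - i)).+1).
Definition Ord2 d (S : nat -> nat) :=
  (forall i, i <= d -> i <= (d.+1 %/ 2).-1 -> S i = (2 * i).+1) /\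
  (forall i, i <= d -> d.+1 %/ 2 <= i -> S i = 2 * (d - i)).

Lemma ord1_rho d S : Ord1 d S -> forall i, i <= d -> rho d (S i) = i /\ S i <= d.
Proof.
move=> [H1 H2] i hi; rewrite /rho.
case: (leqP i (d %/ 2)) => h.
  rewrite H1 //; case: ifP => [/eqP ?|/negbT/eqP ?]; lia.
rewrite H2 //; case: ifP => [/eqP ?|/negbT/eqP ?]; lia.
Qed.

Lemma ord2_rho d S : Ord2 d S -> forall i, i <= d -> rho d (S i) = d - i /\ S i <= d.
Proof.
move=> [H1 H2] i hi; rewrite /rho.
case: (leqP (d.+1 %/ 2) i) => h.
  rewrite H2 //; case: ifP => [/eqP ?|/negbT/eqP ?]; lia.
rewrite H1 //; [case: ifP => [/eqP ?|/negbT/eqP ?]; lia | lia].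
Qed.

Lemma rho_ord1 d S : (forall i, i <= d -> S i <= d) ->
  (forall i, i <= d -> rho d (S i) = i) -> Ord1 d S.
Proof.
move=> HS Hr; split => i hi h; have := Hr i hi; have := HS i hi;
  rewrite /rho; case: ifP => [/eqP ?|/negbT/eqP ?]; lia.
Qed.

Lemma rho_ord2 d S : 0 < d -> (forall i, i <= d -> S i <= d) ->
  (forall i, i <= d -> rho d (S i) = d - i) -> Ord2 d S.
Proof.
move=> dp HS Hr; split => i hi h; have := Hr i hi; have := HS i hi;
  rewrite /rho -?subn1 in h *; case: ifP => [/eqP ?|/negbT/eqP ?]; lia.
Qed.

Lemma steps_path d (t : nat -> nat) : (forall i, i <= d -> t i <= d) ->
  (forall i j, i <= d -> j <= d -> t i = t j -> i = j) ->
  (forall i, i < d -> (t i.+1 == (t i).+1) || (t i == (t i.+1).+1)) ->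
  (forall i, i <= d -> t i = i) \/ (forall i, i <= d -> t i = d - i).
Proof.
move=> Ht Hinj Hst.
case: (posnP d) => [d0|dp].
  left => i hi; have := Ht i hi; lia.
have [up|down] : (t 1 == (t 0).+1) \/ (t 0 == (t 1).+1).
  by apply/orP; apply: Hst.
- have H : forall i, i < d -> t i.+1 = (t i).+1.
    elim=> [_|i IH hi]; first by apply/eqP.
    have := Hst i.+1 hi; case/orP => /eqP h //.
    have e := IH (ltnW hi).
    have := Hinj i.+2 i hi (ltnW (ltnW hi)); lia.
  have H2 : forall i, i <= d -> t i = t 0 + i.
    elim=> [|i IH hi]; first by rewrite addn0.
    rewrite H // IH ?(ltnW hi) //; lia.
  left => i hi; have := H2 d (leqnn d); have := Ht d (leqnn d); have := H2 i hi; lia.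
- have H : forall i, i < d -> t i = (t i.+1).+1.
    elim=> [_|i IH hi]; first by apply/eqP.
    have := Hst i.+1 hi; case/orP => /eqP h //.
    have e := IH (ltnW hi).
    have := Hinj i.+2 i hi (ltnW (ltnW hi)); lia.
  have H2 : forall i, i <= d -> t 0 = t i + i.
    elim=> [|i IH hi]; first by rewrite addn0.
    rewrite IH ?(ltnW hi) // H //; lia.
  right => i hi; have := H2 d (leqnn d); have := Ht 0 (leq0n d); have := H2 i hi; lia.
Qed.

Lemma path1_ord d S : 0 < d -> (forall i, i <= d -> S i <= d) ->
  (forall i j, i <= d -> j <= d -> S i = S j -> i = j) ->
  (forall i, i < d -> adj1 d (S i) (S i.+1)) -> Ord1 d S \/ Ord2 d S.
Proof.
move=> dp HS Hinj Hadj.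
have h1 : forall i, i <= d -> rho d (S i) <= d.
  move=> i hi; apply: rho_le; exact: HS.
have h2 : forall i j, i <= d -> j <= d -> rho d (S i) = rho d (S j) -> i = j.
  move=> i j hi hj /rho_inj e; apply: Hinj => //; apply: e; exact: HS.
have h3 : forall i, i < d -> (rho d (S i.+1) == (rho d (S i)).+1) || (rho d (S i) == (rho d (S i.+1)).+1).
  move=> i hi; have := Hadj i hi; rewrite rho_adj ?HS //; lia.
have [H|H] := @steps_path d (fun i => rho d (S i)) h1 h2 h3.
- by left; apply: rho_ord1.
- by right; apply: rho_ord2.
Qed.

Lemma ord_path1 d S i j : 0 < d -> Ord1 d S \/ Ord2 d S -> i <= d -> j <= d ->
  adj1 d (S i) (S j) = (i == j.+1) || (j == i.+1).
Proof.
move=> dp [H|H] hi hj.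
- have [e1 l1] := ord1_rho d S H i hi; have [e2 l2] := ord1_rho d S H j hj.
  rewrite rho_adj // e1 e2; lia.
- have [e1 l1] := ord2_rho d S H i hi; have [e2 l2] := ord2_rho d S H j hj.
  rewrite rho_adj // e1 e2; lia.
Qed.

Definition adjE (E : nat -> bool) (p q : nat) : bool :=
  (p == q.+2) || (q == p.+2) || ((p == q.+1) && E q) || ((q == p.+1) && E p).

Definition Hperm d (S : nat -> nat) :=
  (forall i, i <= d -> S i <= d) /\
  (forall i j, i <= d -> j <= d -> S i = S j -> i = j) /\
  (forall p, p <= d -> exists2 i, i <= d & S i = p).

Definition PathE d E (S : nat -> nat) :=
  (forall i j, i <= d -> j <= d -> (i.+1 < j \/ j.+1 < i) -> ~~ adjE E (S i) (S j)) /\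
  (forall i j, i <= d -> j <= d -> (i.+1 = j \/ j.+1 = i) -> adjE E (S i) (S j)).

Lemma nbr_pos d E S i j : PathE d E S -> i <= d -> j <= d ->
  adjE E (S i) (S j) -> i = j.+1 \/ j = i.+1 \/ i = j.
Proof.
move=> [Hf _] hi hj ha.
case: (ltnP i.+1 j) => h1; first by move: (Hf i j hi hj (or_introl h1)); rewrite ha.
case: (ltnP j.+1 i) => h2; first by move: (Hf i j hi hj (or_intror h2)); rewrite ha.
lia.
Qed.

Lemma deg2 d E S p x y z : Hperm d S -> PathE d E S -> p <= d -> x <= d -> y <= d -> z <= d ->
  x <> p -> y <> p -> z <> p -> x <> y -> y <> z -> x <> z ->
  adjE E p x -> adjE E p y -> adjE E p z -> False.
Proof.
move=> [HS [Hi Hs]] HP hp hx hy hz.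
case: (Hs p hp) => ip hip <-; case: (Hs x hx) => ix hix <-.
case: (Hs y hy) => iy hiy <-; case: (Hs z hz) => iz hiz <-.
move=> n1 n2 n3 n4 n5 n6 a1 a2 a3.
have m1 : ix <> ip by move=> e; apply: n1; rewrite e.
have m2 : iy <> ip by move=> e; apply: n2; rewrite e.
have m3 : iz <> ip by move=> e; apply: n3; rewrite e.
have m4 : ix <> iy by move=> e; apply: n4; rewrite e.
have m5 : iy <> iz by move=> e; apply: n5; rewrite e.
have m6 : ix <> iz by move=> e; apply: n6; rewrite e.
have [f1|f1] : ix = ip.+1 \/ ip = ix.+1 by have := nbr_pos d E S ip ix HP hip hix a1; lia.
all: have [f2|f2] : iy = ip.+1 \/ ip = iy.+1 by have := nbr_pos d E S ip iy HP hip hiy a2; lia.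
all: have [f3|f3] : iz = ip.+1 \/ ip = iz.+1 by have := nbr_pos d E S ip iz HP hip hiz a3; lia.
all: lia.
Qed.

Lemma end2 d E S x y : Hperm d S -> PathE d E S -> 0 < d -> x <= d -> y <= d ->
  x <> S 0 -> y <> S 0 -> x <> y -> adjE E (S 0) x -> adjE E (S 0) y -> False.
Proof.
move=> [HS [Hi Hs]] HP dp hx hy.
case: (Hs x hx) => ix hix <-; case: (Hs y hy) => iy hiy <-.
move=> n1 n2 n4 a1 a2.
have := nbr_pos d E S 0 ix HP (leq0n d) hix a1; have := nbr_pos d E S 0 iy HP (leq0n d) hiy a2.
have m1 : ix <> 0 by move=> e; apply: n1; rewrite e.
have m2 : iy <> 0 by move=> e; apply: n2; rewrite e.
have m4 : ix <> iy by move=> e; apply: n4; rewrite e.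
lia.
Qed.

Lemma parity d E S : 0 < d -> Hperm d S -> PathE d E S -> (forall k, k < d -> ~~ E k) -> False.
Proof.
move=> dp [HS [Hi Hs]] [_ Hn] HE.
have H : forall i, i <= d -> S i %% 2 = S 0 %% 2.
  elim=> [//|i IH hi].
  have a := Hn i i.+1 (ltnW hi) hi (or_introl erefl).
  have l1 := HS i (ltnW hi); have l2 := HS i.+1 hi.
  rewrite -IH ?(ltnW hi) //.
  move: a; rewrite /adjE.
  have e1 := HE (S i.+1); have e2 := HE (S i).
  lia.
case: (Hs 0 (leq0n d)) => i0 hi0 e0; case: (Hs 1 dp) => i1 hi1 e1.
have := H i0 hi0; have := H i1 hi1; rewrite e0 e1; lia.
Qed.

Lemma Ecase d E S : 0 < d -> Hperm d S -> PathE d E S ->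
  (d = 3 -> ~~ E 0 -> ~~ E 2 -> ~~ E 1) ->
  (E d.-1 /\ forall k, k.+2 <= d -> ~~ E k) \/ (E 0 /\ forall k, 0 < k -> k < d -> ~~ E k).
Proof.
move=> dp HP HPa Halg.
have D := deg2 d E S.
have Hk : forall k, k < d -> E k -> k = 0 \/ k = d.-1 \/ (d = 3 /\ k = 1).
  move=> k hk ek.
  case: (leqP 2 k) => h2.
    case: (leqP k.+2 d) => h3; last lia.
    exfalso; apply: (D k (k-2) k.+2 k.+1 HP HPa); try lia; rewrite /adjE; lia.
  case: (leqP 1 k) => h1; last lia.
  case: (leqP k.+3 d) => h3; last lia.
  exfalso; apply: (D k.+1 k k.+3 (k-1) HP HPa); try lia; rewrite /adjE; lia.
have Hboth : 2 <= d -> E 0 -> E d.-1 -> False.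
  move=> h2 e0 ed.
  have hp : S 0 <= d by case: HP => HS _; exact: HS.
  have : S 0 = 0 \/ S 0 = 1 \/ (2 <= S 0 /\ (S 0).+2 <= d) \/ (2 <= S 0 /\ S 0 = d.-1) \/ S 0 = d by lia.
  case=> [e|[e|[[e1 e2]|[[e3 e]|e]]]].
  - apply: (end2 d E S 1 2 HP HPa dp); try lia; rewrite e /adjE; lia.
  - case: (leqP 3 d) => h3.
      apply: (end2 d E S 0 3 HP HPa dp); try lia; rewrite e /adjE; lia.
    have e1 : E 1 by move: ed; have -> : d = 2 by lia.
    apply: (end2 d E S 0 2 HP HPa dp); try lia; rewrite e /adjE; lia.
  - apply: (end2 d E S (S 0 - 2) (S 0).+2 HP HPa dp); try lia; rewrite /adjE; lia.
  - apply: (end2 d E S d (d - 3) HP HPa dp); try lia; rewrite e /adjE; lia.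
  - apply: (end2 d E S (d - 2) d.-1 HP HPa dp); try lia; rewrite e /adjE; lia.
have H3 : d = 3 -> E 1 -> False.
  move=> d3 e1.
  case e0: (E 0).
    apply: (D 1 0 2 3 HP HPa); try lia; rewrite /adjE; lia.
  case e2: (E 2).
    apply: (D 2 0 1 3 HP HPa); try lia; rewrite /adjE; lia.
  by move: (Halg d3 (negbT e0) (negbT e2)); rewrite e1.
have [k hk ek] : exists2 k, k < d & E k.
  case: (boolP (has E (iota 0 d))) => [/hasP [k] | /hasPn H].
    rewrite mem_iota => /andP [_ hk] ek; exists k => //; lia.
  exfalso; apply: (parity d E S dp HP HPa) => kk hkk; apply: H; rewrite mem_iota; lia.
case e0: (E 0).
- right; split => // k' h1 h2; apply/negP => ek'.
  have := Hk k' h2 ek'; case => [?|[e|[d3 e]]]; first lia.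
    by apply: Hboth => //; [lia | rewrite -e].
  by apply: (H3 d3); rewrite -e.
- left; have := Hk k hk ek; case => [e|[e|[d3 e]]].
  + by subst k; rewrite e0 in ek.
  + split; first by rewrite -e.
    move=> k' hk'; apply/negP => ek'.
    have := Hk k' ltac:(lia) ek'; case => [e'|[e'|[d3 e']]].
    * by subst k'; rewrite e0 in ek'.
    * lia.
    * by apply: (H3 d3); rewrite -e'.
  + by exfalso; apply: (H3 d3); rewrite -e.
Qed.

Lemma adjE_1 d (E : nat -> bool) (p q : nat) : 0 < d -> E d.-1 -> (forall k, k.+2 <= d -> ~~ E k) -> p <= d -> q <= d ->
  adjE E p q = adj1 d p q.
Proof.
move=> dp ed HE hp hq.
have Eq : forall k, k < d -> E k = (k == d.-1).
  move=> k hk; case: (eqVneq k d.-1) => [->|ne]; first by rewrite ed.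
  by apply/negbTE/HE; lia.
rewrite /adjE /adj1; have := Eq q; have := Eq p; lia.
Qed.

Lemma adjE_0 d (E : nat -> bool) (p q : nat) : 0 < d -> E 0 -> (forall k, 0 < k -> k < d -> ~~ E k) -> p <= d -> q <= d ->
  adjE E p q = adj1 d (d - p) (d - q).
Proof.
move=> dp e0 HE hp hq.
have Eq : forall k, k < d -> E k = (k == 0).
  move=> k hk; case: (eqVneq k 0) => [->|ne]; first by rewrite e0.
  by apply/negbTE/HE; lia.
rewrite /adjE /adj1; have := Eq q; have := Eq p; lia.
Qed.

Lemma comb_main d (E : nat -> bool) (S : nat -> nat) : 0 < d -> Hperm d S -> (d = 3 -> ~~ E 0 -> ~~ E 2 -> ~~ E 1) ->
  PathE d E S <->
  ((E d.-1 /\ (forall k, k.+2 <= d -> ~~ E k)) /\ (Ord1 d S \/ Ord2 d S)) \/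
  ((E 0 /\ (forall k, 0 < k -> k < d -> ~~ E k)) /\
     (Ord1 d (fun i => d - S i) \/ Ord2 d (fun i => d - S i))).
Proof.
move=> dp HP Halg; have [HS [Hi Hs]] := HP; split.
- move=> HPa; have [[ed HE]|[e0 HE]] := Ecase d E S dp HP HPa Halg.
  + left; split => //; apply: path1_ord => //.
    move=> i hi; rewrite -(adjE_1 d E) ?HS ?(ltnW hi) //.
    by case: HPa => _ Hn; apply: Hn => //; [exact: ltnW | left].
  + right; split => //; apply: path1_ord => //.
    * move=> i hi; have := HS i hi; lia.
    * move=> i j hi hj e; apply: Hi => //; have := HS i hi; have := HS j hj; lia.
    * move=> i hi; rewrite -(adjE_0 d E) ?HS ?(ltnW hi) //.
      by case: HPa => _ Hn; apply: Hn => //; [exact: ltnW | left].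
- case=> [[[ed HE] HO]|[[e0 HE] HO]].
  + have K : forall i j, i <= d -> j <= d -> adjE E (S i) (S j) = (i == j.+1) || (j == i.+1).
      by move=> i j hi hj; rewrite (adjE_1 d E) ?HS // ord_path1.
    split=> i j hi hj h; rewrite K //; lia.
  + have K : forall i j, i <= d -> j <= d -> adjE E (S i) (S j) = (i == j.+1) || (j == i.+1).
      move=> i j hi hj; rewrite (adjE_0 d E) ?HS //.
      exact: (ord_path1 d (fun i => d - S i) i j dp HO hi hj).
    split=> i j hi hj h; rewrite K //; lia.
Qed.
Local Open Scope ring_scope.
Lemma poch_gt0 (R : realFieldType) (x : R) n : 0 < x -> 0 < poch x n.
Proof.
move=> hx; rewrite /poch; apply: prodr_gt0 => k _.
have := ler0n R k; lra.
Qed.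

Lemma bstar_neq0 (R : realFieldType) d (r s : R) k : -1 < r -> -1 < s -> (k < d)%N ->
  bstar d r s k != 0.
Proof.
move=> hr hs hk; rewrite /bstar hk.
have h1 : 1 <= (d - k)%:R :> R by rewrite ler1n; lia.
have h2 : k%:R + 1 <= d%:R :> R by rewrite natr1 ler_nat.
have p1 := @poch_gt0 R (2 * (d - k)%:R + r + s + 2) k ltac:(lra).
have p2 := @poch_gt0 R (2 * (d - k)%:R + r + s) k.+1 ltac:(lra).
rewrite mulf_neq0 ?invr_neq0 //; last by apply/eqP => H; lra.
rewrite !mulf_neq0 //; apply/eqP => H; lra.
Qed.

Lemma cstar_neq0 (R : realFieldType) d (r s : R) k : -1 < r -> -1 < s -> (0 < k)%N -> (k <= d)%N ->
  cstar d r s k != 0.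
Proof.
move=> hr hs hk hkd; rewrite /cstar hk.
have h1 : 1 <= k%:R :> R by rewrite ler1n.
have h2 : k%:R <= d%:R :> R by rewrite ler_nat.
have h3 : 0 <= (d - k)%:R :> R by exact: ler0n.
have p1 : 0 < poch ((d - k)%:R + r + s + 1) (d - k).
  case e: (d - k)%N; first by rewrite /poch big_ord0 ltr01.
  apply: poch_gt0; rewrite -e.
  have : 1 <= (d - k)%:R :> R by rewrite ler1n; lia.
  lra.
have p2 := @poch_gt0 R ((d - k)%:R + r + s + 2) (d - k).+1 ltac:(lra).
rewrite mulf_neq0 ?invr_neq0 //; last by apply/eqP => H; lra.
rewrite !mulf_neq0 //; apply/eqP => H; lra.
Qed.

Lemma bstar_d (R : realFieldType) d (r s : R) : bstar d r s d = 0.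
Proof. by rewrite /bstar ltnn. Qed.

Lemma cstar_0 (R : realFieldType) d (r s : R) : cstar d r s 0 = 0.
Proof. by rewrite /cstar ltnn. Qed.

Lemma theta_inj (R : realFieldType) d (r s : R) i j : -1 < r -> -1 < s ->
  (i <= d)%N -> (j <= d)%N -> theta d r s i = theta d r s j -> i = j.
Proof.
move=> hr hs hi hj H.
suff : (d - i)%N = (d - j)%N by lia.
apply/eqP; apply: contraT => Hne; suff : False by [].
have H1 : (d - i)%:R - (d - j)%:R != 0 :> R by rewrite subr_eq0 eqr_nat.
have H2 : 1 <= (d - i)%:R + (d - j)%:R :> R by rewrite -natrD ler1n; lia.
have E : theta d r s i - theta d r s j =
  ((d - i)%:R - (d - j)%:R) * ((d - i)%:R + (d - j)%:R + r + s + 1) by rewrite /theta; ring.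
move: E; rewrite H subrr => /esym /eqP; rewrite mulf_eq0 (negbTE H1) /=.
move/eqP => E; lra.
Qed.

Lemma lagr_eval (R : realFieldType) d (r s : R) (i : 'I_d.+1) k : -1 < r -> -1 < s ->
  (k <= d)%N -> (lagr d r s i).[theta d r s k] = ((i : nat) == k)%:R.
Proof.
move=> hr hs hk; rewrite /lagr horner_prod.
case: (eqVneq (i : nat) k) => [<-|Hne].
  apply: big1 => j Hj.
  rewrite hornerM hornerXsubC hornerC divff //.
  rewrite subr_eq0; apply/eqP => /(@theta_inj R d r s i j hr hs (ltn_ord i) (ltn_ord j)) H.
  by move: Hj; rewrite -(inj_eq val_inj) /= H eqxx.
rewrite (bigD1 (inord k)) /=; last first.
  by rewrite -(inj_eq val_inj) /= inordK // eq_sym.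
by rewrite hornerM hornerXsubC hornerC inordK // subrr !mul0r.
Qed.

Definition ww (R : realFieldType) d (r s : R) (k : nat) : R := nu d r s / kstar d r s k.
Arguments ww {R}.

Lemma kstar_neq0 (R : realFieldType) d (r s : R) k : -1 < r -> -1 < s -> (k <= d)%N ->
  kstar d r s k != 0.
Proof.
move=> hr hs hk; rewrite /kstar mulf_neq0 ?invr_neq0 //.
  apply/prodf_neq0 => l _; apply: bstar_neq0 => //; have := ltn_ord l; lia.
rewrite prodf_seq_neq0; apply/allP => l; rewrite mem_index_iota => hl.
apply/implyP => _; apply: cstar_neq0 => //; lia.
Qed.

Lemma nu_neq0 (R : realFieldType) d (r s : R) : -1 < r -> -1 < s -> nu d r s != 0.
Proof.
move=> hr hs; rewrite /nu mulf_neq0 ?invr_neq0 // prodf_seq_neq0; apply/allP => j;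
  rewrite mem_index_iota => hj; apply/implyP => _.
  rewrite subr_eq0; apply/eqP => /(@theta_inj R d r s 0 j hr hs (leq0n d) ltac:(lia)) H; lia.
rewrite /cc mulf_neq0 //; first by rewrite pnatr_eq0; lia.
have : 1 <= j%:R :> R by rewrite ler1n; lia.
move=> h; apply/eqP => H; lra.
Qed.

Lemma ww_neq0 (R : realFieldType) d (r s : R) k : -1 < r -> -1 < s -> (k <= d)%N ->
  ww d r s k != 0.
Proof.
by move=> hr hs hk; rewrite /ww mulf_neq0 ?invr_neq0 ?nu_neq0 ?kstar_neq0.
Qed.

Lemma combo_eval (R : realFieldType) d (r s : R) (c : 'I_d.+1 -> R) k : -1 < r -> -1 < s ->
  (k <= d)%N -> (\sum_i c i *: lagr d r s i).[theta d r s k] = c (inord k).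
Proof.
move=> hr hs hk.
rewrite horner_sum (bigD1 (inord k)) //= hornerZ lagr_eval // inordK // eqxx mulr1.
rewrite big1 ?addr0 // => i hi; rewrite hornerZ lagr_eval //.
have -> : ((i : nat) == k) = false.
  apply/negbTE; move: hi; apply: contra => /eqP <-; by rewrite inord_val.
by rewrite mulr0.
Qed.

Definition isC (R : realFieldType) d (r s : R) (p : {poly R}) :=
  p = \sum_(i < d.+1) p.[theta d r s i] *: lagr d r s i.
Arguments isC {R}.

Lemma isC_combo (R : realFieldType) d (r s : R) (c : 'I_d.+1 -> R) : -1 < r -> -1 < s ->
  isC d r s (\sum_i c i *: lagr d r s i).
Proof.
move=> hr hs; rewrite /isC; apply: eq_bigr => i _.
by rewrite combo_eval ?inord_val // -ltnS.
Qed.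

Lemma isC_lagr (R : realFieldType) d (r s : R) (i : 'I_d.+1) : -1 < r -> -1 < s ->
  isC d r s (lagr d r s i).
Proof.
move=> hr hs.
have -> : lagr d r s i = \sum_j ((j == i)%:R : R) *: lagr d r s j.
  rewrite (bigD1 i) //= eqxx scale1r big1 ?addr0 // => j /negbTE ->.
  by rewrite scale0r.
exact: isC_combo.
Qed.

Lemma isC_add (R : realFieldType) d (r s : R) p q :
  isC d r s p -> isC d r s q -> isC d r s (p + q).
Proof.
rewrite /isC => Hp Hq.
under eq_bigr do rewrite hornerD scalerDl.
by rewrite big_split /= -Hp -Hq.
Qed.

Lemma isC_scale (R : realFieldType) d (r s : R) a p :
  isC d r s p -> isC d r s (a *: p).
Proof.
rewrite /isC => Hp.
under eq_bigr do rewrite hornerZ -scalerA.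
by rewrite -scaler_sumr -Hp.
Qed.

Lemma isC_sum (R : realFieldType) d (r s : R) (I : finType) (F : I -> {poly R}) :
  (forall i, isC d r s (F i)) -> isC d r s (\sum_i F i).
Proof.
move=> H; apply: (big_ind (isC d r s)) => //.
- rewrite /isC; rewrite big1 // => i _; by rewrite horner0 scale0r.
- move=> x y; exact: isC_add.
Qed.

Lemma isC_ext (R : realFieldType) d (r s : R) p q : isC d r s p -> isC d r s q ->
  (forall k, (k <= d)%N -> p.[theta d r s k] = q.[theta d r s k]) -> p = q.
Proof.
move=> Hp Hq H; rewrite Hp Hq; apply: eq_bigr => i _; rewrite H //; have := ltn_ord i; lia.
Qed.

Lemma isC_Lstar (R : realFieldType) d (r s : R) f : -1 < r -> -1 < s ->
  isC d r s (Lstar d r s f).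
Proof. by move=> hr hs; rewrite /Lstar /interp; apply: isC_combo. Qed.

Lemma isC_ustar (R : realFieldType) d (r s : R) i : -1 < r -> -1 < s ->
  isC d r s (ustar d r s i).
Proof. by move=> hr hs; rewrite /ustar; apply: isC_scale; apply: isC_lagr. Qed.

Lemma Lstar_eval (R : realFieldType) d (r s : R) f k : -1 < r -> -1 < s -> (k <= d)%N ->
  (Lstar d r s f).[theta d r s k] = bstar d r s k * f.[theta d r s k.+1]
     + astar d r s k * f.[theta d r s k] + cstar d r s k * f.[theta d r s k.-1].
Proof. by move=> hr hs hk; rewrite /Lstar /interp combo_eval // inordK. Qed.

Lemma ustar_eval (R : realFieldType) d (r s : R) (i : 'I_d.+1) k : -1 < r -> -1 < s ->
  (k <= d)%N -> (ustar d r s i).[theta d r s k] = ww d r s i * ((i : nat) == k)%:R.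
Proof. by move=> hr hs hk; rewrite /ustar hornerZ lagr_eval. Qed.

Definition XX (R : realFieldType) d (r s lam : R) (q p : nat) : R :=
  bstar d r s p * (q == p.+1)%:R + (astar d r s p + lam) * (q == p)%:R
  + cstar d r s p * (q == p.-1)%:R.
Arguments XX {R}.

Definition YY (R : realFieldType) d (r s lam : R) (q p : nat) : R :=
  bstar d r s p * XX d r s lam q p.+1 + (astar d r s p + lam) * XX d r s lam q p
  + cstar d r s p * XX d r s lam q p.-1.
Arguments YY {R}.

Lemma g_eval (R : realFieldType) d (r s lam : R) (q : 'I_d.+1) k : -1 < r -> -1 < s ->
  (k <= d)%N ->
  (Lstar d r s (ustar d r s q) + lam *: ustar d r s q).[theta d r s k]
  = ww d r s q * XX d r s lam q k.
Proof.
move=> hr hs hk; rewrite hornerD hornerZ Lstar_eval // /XX.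
have hk1 : (k.-1 <= d)%N by lia.
case: (ltnP k d) => hkd.
  rewrite !ustar_eval //; ring.
have e : k = d by lia.
rewrite e bstar_d !mul0r !add0r !ustar_eval ?leq_pred //; ring.
Qed.

Lemma L2_eval (R : realFieldType) d (r s lam : R) (q : 'I_d.+1) p : -1 < r -> -1 < s ->
  (p <= d)%N ->
  (LstarL2 d r s lam (ustar d r s q)).[theta d r s p] = ww d r s q * YY d r s lam q p.
Proof.
move=> hr hs hp; rewrite /LstarL2 /= hornerD hornerZ Lstar_eval // /YY.
have hp1 : (p.-1 <= d)%N by lia.
case: (ltnP p d) => hpd.
  rewrite !g_eval //; ring.
have e : p = d by lia.
rewrite e bstar_d !mul0r !add0r !g_eval ?leq_pred //; ring.
Qed.

Ltac decide_eqn :=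
  repeat match goal with
  | |- context [ (?x == ?y)%N ] =>
      first [ have -> : (x == y)%N = true by apply/eqP; lia
            | have -> : (x == y)%N = false by apply/negbTE/eqP; lia ]
  end.

Lemma Y_far (R : realFieldType) d (r s lam : R) q p : (q.+2 < p \/ p.+2 < q)%N ->
  YY d r s lam q p = 0.
Proof. move=> h; rewrite /YY /XX; decide_eqn; rewrite /=; ring. Qed.

Lemma Y_p2 (R : realFieldType) d (r s lam : R) q :
  YY d r s lam q q.+2 = cstar d r s q.+2 * cstar d r s q.+1.
Proof. rewrite /YY /XX /=; decide_eqn; rewrite /=; ring. Qed.

Lemma Y_q2 (R : realFieldType) d (r s lam : R) p :
  YY d r s lam p.+2 p = bstar d r s p * bstar d r s p.+1.
Proof. rewrite /YY /XX /=; decide_eqn; rewrite /=; ring. Qed.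

Lemma Y_p1 (R : realFieldType) d (r s lam : R) q :
  YY d r s lam q q.+1 = cstar d r s q.+1 * (2 * lam + astar d r s q + astar d r s q.+1).
Proof. case: q => [|q]; rewrite /YY /XX /= ?cstar_0; decide_eqn; rewrite /=; ring. Qed.

Lemma Y_q1 (R : realFieldType) d (r s lam : R) p :
  YY d r s lam p.+1 p = bstar d r s p * (2 * lam + astar d r s p + astar d r s p.+1).
Proof. case: p => [|p]; rewrite /YY /XX /= ?cstar_0; decide_eqn; rewrite /=; ring. Qed.

Lemma Y_nz (R : realFieldType) d (r s lam : R) p q : -1 < r -> -1 < s ->
  (p <= d)%N -> (q <= d)%N -> p <> q ->
  (YY d r s lam q p != 0) = adjE (fun k => 2 * lam + astar d r s k + astar d r s k.+1 != 0) p q.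
Proof.
move=> hr hs hp hq hpq.
have : p = q.+2 \/ q = p.+2 \/ p = q.+1 \/ q = p.+1 \/ (q.+2 < p \/ p.+2 < q)%N by lia.
case=> [e|[e|[e|[e|e]]]].
- subst p; rewrite Y_p2 /adjE; decide_eqn; rewrite /=.
  by rewrite mulf_neq0 // cstar_neq0 //; lia.
- subst q; rewrite Y_q2 /adjE; decide_eqn; rewrite /=.
  by rewrite mulf_neq0 // bstar_neq0 //; lia.
- subst p; rewrite Y_p1 /adjE; decide_eqn; rewrite /= ?orbF.
  by rewrite mulf_eq0 negb_or cstar_neq0 //; lia.
- subst q; rewrite Y_q1 /adjE; decide_eqn; rewrite /= ?orbF.
  by rewrite mulf_eq0 negb_or bstar_neq0 //; lia.
- rewrite Y_far // eqxx /adjE; decide_eqn; done.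
Qed.

Lemma alg_d3_aux (R : realFieldType) (r s : R) : -1 < r -> -1 < s ->
  astar 3 r s 0 + astar 3 r s 1 - astar 3 r s 2 - astar 3 r s 3 =
  (s - r) * ((3 / (r + s + 6) + (r + s + 12) / ((r + s + 4) * (r + s + 6)) + 4 / (r + s + 4)) / 2).
Proof.
move=> hr hs.
rewrite /astar /bstar /cstar /poch /=.
rewrite !big_ord_recr !big_ord0 /=.
rewrite (_ : (3 - 0)%N = 3) // (_ : (3 - 1)%N = 2) // (_ : (3 - 2)%N = 1) // (_ : (3 - 3)%N = 0) //.
field.
by apply/and5P; split; apply/eqP => H; lra.
Qed.

Lemma alg_d3 (R : realFieldType) (r s lam : R) : -1 < r -> -1 < s ->
  ~~ (2 * lam + astar 3 r s 0 + astar 3 r s 1 != 0) ->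
  ~~ (2 * lam + astar 3 r s 2 + astar 3 r s 3 != 0) ->
  ~~ (2 * lam + astar 3 r s 1 + astar 3 r s 2 != 0).
Proof.
move=> hr hs; rewrite !negbK => /eqP h0 /eqP h2; apply/eqP.
have E := @alg_d3_aux R r s hr hs.
have G : 0 < (3 / (r + s + 6) + (r + s + 12) / ((r + s + 4) * (r + s + 6)) + 4 / (r + s + 4)) / 2.
  apply: divr_gt0; last lra.
  apply: addr_gt0; first apply: addr_gt0.
  - apply: divr_gt0; lra.
  - apply: divr_gt0; first lra; apply: mulr_gt0; lra.
  - apply: divr_gt0; lra.
have esr : s = r.
  have : (s - r) * ((3 / (r + s + 6) + (r + s + 12) / ((r + s + 4) * (r + s + 6)) + 4 / (r + s + 4)) / 2) = 0.
    rewrite -E; lra.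
  move/eqP; rewrite mulf_eq0 => /orP [/eqP H|/eqP H]; lra.
have E2 : astar 3 r s 0 - astar 3 r s 2 = 0.
  rewrite esr /astar /bstar /cstar /poch /=.
  rewrite !big_ord_recr !big_ord0 /=.
  rewrite (_ : (3 - 0)%N = 3) // (_ : (3 - 2)%N = 1) //.
  field.
  by apply/and4P; split; apply/eqP => H; lra.
lra.
Qed.

Lemma sum_ubar_eval (R : realFieldType) d (r s : R) (sigma : {perm 'I_d.+1})
  (c : 'I_d.+1 -> R) i : -1 < r -> -1 < s ->
  (\sum_k c k *: ustar d r s (sigma k)).[theta d r s (sigma i)] = c i * ww d r s (sigma i).
Proof.
move=> hr hs.
rewrite horner_sum (bigD1 i) //= hornerZ ustar_eval // ?eqxx ?mulr1; last first.
  by have := ltn_ord (sigma i).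
rewrite big1 ?addr0 // => k hk; rewrite hornerZ ustar_eval //; last first.
  by have := ltn_ord (sigma i).
have -> : ((sigma k : nat) == sigma i) = false.
  by apply/negbTE; rewrite (inj_eq val_inj) (inj_eq perm_inj).
by rewrite !mulr0.
Qed.

Lemma rep_entry (R : realFieldType) d (r s lam : R) (sigma : {perm 'I_d.+1}) M :
  -1 < r -> -1 < s ->
  represents (LstarL2 d r s lam) (fun i => ustar d r s (sigma i)) M ->
  forall i j, M i j = ww d r s (sigma j) / ww d r s (sigma i) * YY d r s lam (sigma j) (sigma i).
Proof.
move=> hr hs H i j.
have Hw : ww d r s (sigma i) != 0 by apply: ww_neq0; have := ltn_ord (sigma i).
have Hm : M i j * ww d r s (sigma i) = ww d r s (sigma j) * YY d r s lam (sigma j) (sigma i).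
  rewrite -(@sum_ubar_eval R d r s sigma (fun k => M k j)) // -H L2_eval //.
  by have := ltn_ord (sigma i).
apply: (mulIf Hw); rewrite Hm; field; exact: Hw.
Qed.

Lemma rep_exists (R : realFieldType) d (r s lam : R) (sigma : {perm 'I_d.+1}) :
  -1 < r -> -1 < s ->
  represents (LstarL2 d r s lam) (fun i => ustar d r s (sigma i))
    (\matrix_(i, j) (ww d r s (sigma j) / ww d r s (sigma i) * YY d r s lam (sigma j) (sigma i))).
Proof.
move=> hr hs j.
apply: (@isC_ext R d r s).
- rewrite /LstarL2 /=; apply: isC_add; first exact: isC_Lstar.
  apply: isC_scale; apply: isC_add; first exact: isC_Lstar.
  by apply: isC_scale; apply: isC_ustar.
- by apply: isC_sum => i; apply: isC_scale; apply: isC_ustar.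
move=> k hk.
have hk' : (k < d.+1)%N by [].
have e : k = sigma ((sigma^-1)%g (Ordinal hk')) :> nat by rewrite permKV.
rewrite e sum_ubar_eval // L2_eval ?mxE //; last by have := ltn_ord (sigma ((sigma^-1)%g (Ordinal hk'))).
have Hw : ww d r s (sigma ((sigma^-1)%g (Ordinal hk'))) != 0.
  by apply: ww_neq0; have := ltn_ord (sigma ((sigma^-1)%g (Ordinal hk'))).
field; exact: Hw.
Qed.

Definition SS d (sigma : {perm 'I_d.+1}) (i : nat) : nat := sigma (inord i).
Arguments SS {d}.

Lemma SS_ord d (sigma : {perm 'I_d.+1}) (i : 'I_d.+1) : SS sigma i = sigma i.
Proof. by rewrite /SS inord_val. Qed.

Lemma SS_le d (sigma : {perm 'I_d.+1}) i : (SS sigma i <= d)%N.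
Proof. by rewrite /SS -ltnS ltn_ord. Qed.

Lemma Hperm_SS d (sigma : {perm 'I_d.+1}) : Hperm d (SS sigma).
Proof.
split; first by move=> i _; apply: SS_le.
split.
  move=> i j hi hj; rewrite /SS => /val_inj /perm_inj /(congr1 (@nat_of_ord _)).
  by rewrite !inordK.
move=> p hp; exists ((sigma^-1)%g (inord p)); first by rewrite -ltnS ltn_ord.
by rewrite /SS inord_val permKV inordK.
Qed.

Lemma Mnz (R : realFieldType) d (r s lam : R) (sigma : {perm 'I_d.+1}) M :
  -1 < r -> -1 < s ->
  represents (LstarL2 d r s lam) (fun i => ustar d r s (sigma i)) M ->
  forall i j, i != j -> (M i j != 0) =
    adjE (fun k => 2 * lam + astar d r s k + astar d r s k.+1 != 0) (sigma i) (sigma j).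
Proof.
move=> hr hs H i j hij.
have li := ltn_ord (sigma i); have lj := ltn_ord (sigma j).
rewrite (@rep_entry R d r s lam sigma M hr hs H) mulf_eq0 negb_or mulf_neq0 ?invr_neq0 ?ww_neq0 //=.
apply: Y_nz => //.
by move/val_inj/perm_inj => e; move: hij; rewrite e eqxx.
Qed.

Lemma irred_PathE (R : realFieldType) d (sigma : {perm 'I_d.+1}) (M : 'M[R]_d.+1) E :
  (forall i j, i != j -> (M i j != 0) = adjE E (sigma i) (sigma j)) ->
  irred_tridiag M <-> PathE d E (SS sigma).
Proof.
move=> HM; split.
- case=> H1 H2; split.
  + move=> i j hi hj h.
    have nij : (inord i : 'I_d.+1) != inord j.
      by apply/eqP => /(congr1 (@nat_of_ord _)); rewrite !inordK //; lia.
    have := H1 (inord i) (inord j); rewrite !inordK // => /(_ h) e.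
    by rewrite /SS -HM // e eqxx.
  + move=> i j hi hj h.
    have nij : (inord i : 'I_d.+1) != inord j.
      by apply/eqP => /(congr1 (@nat_of_ord _)); rewrite !inordK //; lia.
    have := H2 (inord i) (inord j); rewrite !inordK // => /(_ h) e.
    by rewrite /SS -HM.
- case=> P1 P2; split => i j h.
  + have nij : i != j by apply/eqP => e; move: h; rewrite e; lia.
    have := P1 i j (ltn_ord i) (ltn_ord j) h; rewrite !SS_ord -HM //.
    by rewrite negbK => /eqP.
  + have nij : i != j by apply/eqP => e; move: h; rewrite e; lia.
    have := P2 i j (ltn_ord i) (ltn_ord j) h; rewrite !SS_ord -HM //.
Qed.

Lemma ord1_tr d (sigma : {perm 'I_d.+1}) : Ord1 d (SS sigma) <->
  ((forall i : 'I_d.+1, (i <= d./2)%N -> sigma i = (2 * i)%N :> nat) /\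
   (forall i : 'I_d.+1, (d./2 < i)%N -> sigma i = (2 * (d - i)).+1 :> nat)).
Proof.
have hh : (d./2 = d %/ 2)%N by rewrite divn2.
rewrite /Ord1 divn2; split => [[H1 H2]|[H1 H2]]; split.
- by move=> i hi; rewrite -SS_ord; apply: H1 => //; rewrite -ltnS.
- by move=> i hi; rewrite -SS_ord; apply: H2 => //; rewrite -ltnS.
- by move=> i hi h; rewrite /SS; have := H1 (inord i); rewrite inordK ?ltnS //; apply.
- by move=> i hi h; rewrite /SS; have := H2 (inord i); rewrite inordK ?ltnS //; apply.
Qed.

Lemma ord2_tr d (sigma : {perm 'I_d.+1}) : Ord2 d (SS sigma) <->
  ((forall i : 'I_d.+1, (i <= (uphalf d).-1)%N -> sigma i = (2 * i).+1 :> nat) /\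
   (forall i : 'I_d.+1, (uphalf d <= i)%N -> sigma i = (2 * (d - i))%N :> nat)).
Proof.
have hu : (uphalf d = d.+1 %/ 2)%N by rewrite uphalfE divn2.
rewrite /Ord2 divn2 -uphalfE; split => [[H1 H2]|[H1 H2]]; split.
- by move=> i hi; rewrite -SS_ord; apply: H1 => //; rewrite -ltnS.
- by move=> i hi; rewrite -SS_ord; apply: H2 => //; rewrite -ltnS.
- by move=> i hi h; rewrite /SS; have := H1 (inord i); rewrite inordK ?ltnS //; apply.
- by move=> i hi h; rewrite /SS; have := H2 (inord i); rewrite inordK ?ltnS //; apply.
Qed.

Lemma ord1_tr' d (sigma : {perm 'I_d.+1}) : Ord1 d (fun i => (d - SS sigma i)%N) <->
  ((forall i : 'I_d.+1, (i <= d./2)%N -> sigma i = (d - 2 * i)%N :> nat) /\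
   (forall i : 'I_d.+1, (d./2 < i)%N -> sigma i = (2 * i - d).-1 :> nat)).
Proof.
have hh : (d./2 = d %/ 2)%N by rewrite divn2.
rewrite /Ord1 divn2; split => [[H1 H2]|[H1 H2]]; split.
- move=> i hi; have := H1 i (ltn_ord i) hi; have := ltn_ord i; have := SS_le d sigma i; rewrite SS_ord; lia.
- move=> i hi; have := H2 i (ltn_ord i) hi; have := ltn_ord i; have := SS_le d sigma i; rewrite SS_ord; lia.
- move=> i hi h; have := SS_le d sigma i; rewrite /SS; have := H1 (inord i);
    rewrite inordK ?ltnS // => /(_ h); lia.
- move=> i hi h; have := SS_le d sigma i; rewrite /SS; have := H2 (inord i);
    rewrite inordK ?ltnS // => /(_ h); lia.
Qed.

Lemma ord2_tr' d (sigma : {perm 'I_d.+1}) : (0 < d)%N -> Ord2 d (fun i => (d - SS sigma i)%N) <->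
  ((forall i : 'I_d.+1, (i <= (uphalf d).-1)%N -> sigma i = (d - 2 * i).-1 :> nat) /\
   (forall i : 'I_d.+1, (uphalf d <= i)%N -> sigma i = (2 * i - d)%N :> nat)).
Proof.
move=> dp.
have hu : (uphalf d = d.+1 %/ 2)%N by rewrite uphalfE divn2.
rewrite /Ord2 divn2 -uphalfE; split => [[H1 H2]|[H1 H2]]; split.
- move=> i hi; have := H1 i (ltn_ord i) hi; have := ltn_ord i; have := SS_le d sigma i; rewrite SS_ord; lia.
- move=> i hi; have := H2 i (ltn_ord i) hi; have := ltn_ord i; have := SS_le d sigma i; rewrite SS_ord; lia.
- move=> i hi h; have := SS_le d sigma i; rewrite /SS; have := H1 (inord i);
    rewrite inordK ?ltnS // => /(_ h); lia.
- move=> i hi h; have := SS_le d sigma i; rewrite /SS; have := H2 (inord i);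
    rewrite inordK ?ltnS // => /(_ h); lia.
Qed.

Theorem proposition2p5 (R : realFieldType) (d : nat) (r s lam : R)
  (sigma : {perm 'I_d.+1}) :
  (1 <= d)%N -> -1 < r -> -1 < s ->
  let ubar := fun i : 'I_d.+1 => ustar d r s (sigma i) in
  let a := astar d r s in
  (exists M : 'M[R]_d.+1, represents (LstarL2 d r s lam) ubar M) /\
  (forall M : 'M[R]_d.+1, represents (LstarL2 d r s lam) ubar M ->
    (irred_tridiag M <->
      ((2 * lam + a d.-1 + a d != 0 /\
        (forall i : nat, (i.+2 <= d)%N -> 2 * lam + a i + a i.+1 = 0) /\
        ((forall i : 'I_d.+1, (i <= d./2)%N -> sigma i = (2 * i)%N :> nat) /\
         (forall i : 'I_d.+1, (d./2 < i)%N -> sigma i = (2 * (d - i)).+1 :> nat)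
         \/
         (forall i : 'I_d.+1, (i <= (uphalf d).-1)%N -> sigma i = (2 * i).+1 :> nat) /\
         (forall i : 'I_d.+1, (uphalf d <= i)%N -> sigma i = (2 * (d - i))%N :> nat)))
      \/
      (2 * lam + a 0%N + a 1%N != 0 /\
        (forall i : nat, (1 <= i)%N -> (i < d)%N -> 2 * lam + a i + a i.+1 = 0) /\
        ((forall i : 'I_d.+1, (i <= d./2)%N -> sigma i = (d - 2 * i)%N :> nat) /\
         (forall i : 'I_d.+1, (d./2 < i)%N -> sigma i = (2 * i - d).-1 :> nat)
         \/
         (forall i : 'I_d.+1, (i <= (uphalf d).-1)%N -> sigma i = (d - 2 * i).-1 :> nat) /\
         (forall i : 'I_d.+1, (uphalf d <= i)%N -> sigma i = (2 * i - d)%N :> nat)))))).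
Proof.
move=> hd hr hs ubar a.
split; first by eexists; exact: rep_exists.
move=> M HM.
set E := (fun k => 2 * lam + astar d r s k + astar d r s k.+1 != 0).
have HMz := @Mnz R d r s lam sigma M hr hs HM.
have Halg : d = 3 -> ~~ E 0 -> ~~ E 2 -> ~~ E 1.
  by move=> d3; subst d; apply: alg_d3.
apply: iff_trans (@irred_PathE R d sigma M E HMz) _.
apply: iff_trans (comb_main d E (SS sigma) hd (Hperm_SS d sigma) Halg) _.
have e1 : E d.-1 = (2 * lam + a d.-1 + a d != 0) by rewrite /E prednK.
have e2 : forall k, ~~ E k <-> 2 * lam + a k + a k.+1 = 0.
  by move=> k; rewrite /E negbK; split => /eqP.
rewrite e1; split.
- case=> [[[h1 h2] HO]|[[h1 h2] HO]]; [left|right]; split => //; split.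
  + by move=> k hk; apply/e2; apply: h2.
  + by case: HO => [/ord1_tr H|/ord2_tr H]; [left|right].
  + by move=> k hk1 hk2; apply/e2; apply: h2.
  + by case: HO => [/ord1_tr' H|/(ord2_tr' d sigma hd) H]; [left|right].
- case=> [[h1 [h2 HO]]|[h1 [h2 HO]]]; [left|right]; split.
  + by split => // k hk; apply/e2; apply: h2.
  + by case: HO => [/ord1_tr H|/ord2_tr H]; [left|right].
  + by split => // k hk1 hk2; apply/e2; apply: h2.
  + by case: HO => [/ord1_tr' H|/(ord2_tr' d sigma hd) H]; [left|right].
Qed.
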